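(* Let $n\in\mathbb{N}$ and let $\underline{\Delta},\tilde{\Delta}:\{k\in\mathbb{N}_0^{\{0,1\}^2}:k_{++}=n\}\to[-1,1]$ be two lower confidence bounds for the parameter $q\mapsto q_{01}-q_{10}$ in the multinomial model $\mathcal{M}:=(\mathrm{M}_{n,q}:q\in\mathrm{prob}(\{0,1\}^2))$ which are equivalent, i.e. $\mathrm{M}_{n,q}(\tilde{\Delta}\ge t)=\mathrm{M}_{n,q}(\underline{\Delta}\ge t)$ for all $q\in\mathrm{prob}(\{0,1\}^2)$ and all $t<q_{01}-q_{10}$. Then $\underline{\Delta}=\tilde{\Delta}$.
   Context: $\mathrm{prob}(\{0,1\}^2)$ is the set of probability densities on $\{0,1\}^2$; $\mathrm{M}_{n,q}$ is the multinomial distribution with sample size $n$ and probability vector $q$; $k_{++}=\sum_{i,j\in\{0,1\}}k_{ij}$. A lower $\beta$-confidence bound for a parameter $\kappa$ in a model $(P_\theta)$ is a function $\underline{\kappa}$ with $P_\theta(\underline{\kappa}\le\kappa(\theta))\ge\beta$ for all $\theta$ (here for some fixed $\beta\in[0,1]$). *)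

(* Defs.v *)
From HB Require Import structures.
From mathcomp Require Import all_boot all_order all_algebra.
From mathcomp Require Import reals.
Unset Strict Implicit. Unset Printing Implicit Defensive.
Import Order.TTheory GRing.Theory Num.Theory.
Local Open Scope ring_scope.

(* Cells of the 2x2 table: {0,1}^2, encoded as bool * bool
   (false = 0, true = 1). *)
Definition cell := (bool * bool)%type.

(* Sample space {k in N_0^{ {0,1}^2 } : k_{++} = n}.  Each k_ij <= n, so
   entries are taken in 'I_n.+1. *)
Definition sspace (n : nat) :=
  {k : {ffun cell -> 'I_n.+1} | (\sum_(c : cell) (k c : nat) == n)%N}.

Definition kval (n : nat) (k : sspace n) (c : cell) : nat := val k c.

Definition is_prob {R : realType} (q : {ffun cell -> R}) : Prop :=
  (forall c, 0 <= q c) /\ \sum_(c : cell) q c = 1.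

Definition mult_pmf {R : realType} (n : nat) (q : {ffun cell -> R})
    (k : sspace n) : R :=
  (n`!)%:R / (\prod_(c : cell) (kval n k c)`!)%:R
    * \prod_(c : cell) q c ^+ kval n k c.

Definition multinomial {R : realType} (n : nat) (q : {ffun cell -> R})
    (A : pred (sspace n)) : R :=
  \sum_(k : sspace n | A k) mult_pmf n q k.

Definition kappa {R : realType} (q : {ffun cell -> R}) : R :=
  q (false, true) - q (true, false).

Definition lower_conf_bound {R : realType} (n : nat) (beta : R)
    (D : sspace n -> R) : Prop :=
  forall q : {ffun cell -> R}, is_prob q ->
    beta <= multinomial n q [pred k | D k <= kappa q].

(* Main.v *)
Require Import Defs.
From HB Require Import structures.
From mathcomp Require Import all_boot all_order all_algebra.
From mathcomp Require Import reals.
From mathcomp Require Import zify ring lra.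
From Stdlib Require Import FunctionalExtensionality.
Import Order.TTheory GRing.Theory Num.Theory.
Local Open Scope ring_scope.

Lemma big_cell (T : Type) (idx : T) (op : Monoid.com_law idx) (F : cell -> T) :
  \big[op/idx]_(c : cell) F c = op (op (F (true,true)) (F (true,false))) (op (F (false,true)) (F (false,false))).
Proof.
transitivity (\big[op/idx]_(p : bool * bool) F (p.1, p.2)); first by apply: eq_bigr => -[].
by rewrite -(pair_bigA _ (fun a b => F (a,b))) /= !big_bool.
Qed.

Lemma dm (E a b a' b' : nat) : (a < E)%N -> (a' < E)%N -> (a + E*b = a' + E*b')%N -> a = a' /\ b = b'.
Proof. move=> ha ha' h.
have h1 := congr1 (modn^~ E) h; have h2 := congr1 (divn^~ E) h; move: h1 h2 => /=.
rewrite !(mulnC E) ![(_ + _ * E)%N]addnC !modnMDl !divnMDl ?(leq_ltn_trans _ ha) // !modn_small // !divn_small // !addn0. by [].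
Qed.

Lemma ksum n (k : sspace n) :
  (kval n k (true,true) + kval n k (true,false) + (kval n k (false,true) + kval n k (false,false)) = n)%N.
Proof. by have /eqP := valP k; rewrite big_cell. Qed.

Definition ex n (k : sspace n) : nat :=
  (kval n k (false,false) + n.+1 * (kval n k (true,false) + n.+1 * kval n k (true,true)))%N.

Lemma ex_inj n : injective (ex n).
Proof.
move=> k k' h.
have lt c (j : sspace n) : (kval n j c < n.+1)%N by apply: ltn_ord.
have [h1 h2] := @dm n.+1 _ _ _ _ (lt _ _) (lt _ _) h.
have [h3 h4] := @dm n.+1 _ _ _ _ (lt _ _) (lt _ _) h2.
have s1 := @ksum n k; have s2 := @ksum n k'.
have h5 : kval n k (false,true) = kval n k' (false,true) by lia.
apply/val_inj/ffunP => -[[] []]; apply/val_inj => //.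
Qed.

Section Key.
Variable R : realType.
Variable n : nat.

Definition Sx (x : R) := x ^+ (n.+1 * n.+1) + x ^+ n.+1 + (1 + x).
Definition qx (x : R) : {ffun cell -> R} :=
  [ffun c : cell => (if c.1 then (if c.2 then x ^+ (n.+1 * n.+1) else x ^+ n.+1)
                     else (if c.2 then 1 else x)) / Sx x].
Definition Cf (k : sspace n) : R := (n`!)%:R / (\prod_(c : cell) (kval n k c)`!)%:R.

Lemma Sx_gt0 x : 0 < x -> 0 < Sx x.
Proof.
move=> hx; rewrite /Sx.
have h1 : 0 < x ^+ (n.+1 * n.+1) by rewrite exprn_gt0.
have h2 : 0 < x ^+ n.+1 by rewrite exprn_gt0.
lra. Qed.

Lemma qx_prob x : 0 < x -> is_prob (qx x).
Proof.
move=> hx; have hS := @Sx_gt0 x hx; split.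
  move=> -[[] []]; rewrite ffunE /=; apply: divr_ge0; rewrite ?exprn_ge0 ?ltW //.
rewrite big_cell !ffunE /=; rewrite /Sx; field.
by have := hS; rewrite /Sx; lra.
Qed.

Lemma pmf_qx x k : 0 < x -> mult_pmf n (qx x) k = Cf k * x ^+ ex n k / Sx x ^+ n.
Proof.
move=> hx; have hS := @Sx_gt0 x hx.
rewrite /mult_pmf; set P := (X in _ * X = _).
have -> : P = x ^+ ex n k / Sx x ^+ n.
  have : Sx x != 0 by rewrite gt_eqF.
  move: (@ksum n k); rewrite /P /ex big_cell !ffunE.
  set S := Sx x; set a := kval n k (true,true); set b := kval n k (true,false).
  set c := kval n k (false,true); set d := kval n k (false,false).
  set E := n.+1; clearbody S a b c d E => /= <- hS0.
  rewrite !expr_div_n expr1n -!exprM !exprD !exprM.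
  rewrite !exprD !exprM. field. by rewrite !expf_neq0.
by rewrite /Cf !mulrA.
Qed.

Lemma Cf_neq0 k : Cf k != 0.
Proof.
rewrite /Cf mulf_neq0 // ?invr_eq0 pnatr_eq0 -lt0n ?fact_gt0 //.
by apply: prodn_gt0 => c; rewrite fact_gt0.
Qed.

Lemma num_ineq (t x a b : R) : 0 < x -> x * (2 * (1 - t) + 8) <= 1 - t -> t < 1 ->
  a <= x -> b <= x -> 0 <= a -> 0 <= b -> t * (b + a + (1 + x)) < 1 - a.
Proof.
move=> hx hxu ht ha hb ha0 hb0.
have [t0|t0] := lerP 0 t.
  have h1 : 0 <= t * (x - a) by rewrite mulr_ge0 // subr_ge0.
  have h2 : 0 <= t * (x - b) by rewrite mulr_ge0 // subr_ge0.
  have h3 : 0 < x * (9 - 5 * t) by rewrite mulr_gt0 //; lra.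
  nra.
have h1 : t * (b + a + x) <= 0 by rewrite nmulr_rle0 //; lra.
have h3 : 0 < x * (9 - t) by rewrite mulr_gt0 //; lra.
nra.
Qed.

Lemma kappa_qx x t : 0 < x -> x * (2 * (1 - t) + 8) <= 1 - t -> t < 1 -> t < kappa (qx x).
Proof.
move=> hx hxu ht.
have hx1 : x <= 1 by nra.
have ha : x ^+ n.+1 <= x by apply: ler_iXnr => //; exact: ltW.
have hb : x ^+ (n.+1 * n.+1) <= x by apply: ler_iXnr => //; exact: ltW.
have ha0 : 0 <= x ^+ n.+1 by rewrite exprn_ge0 // ltW.
have hb0 : 0 <= x ^+ (n.+1 * n.+1) by rewrite exprn_ge0 // ltW.
have hS := @Sx_gt0 x hx.
rewrite /kappa !ffunE; move: hS; rewrite /Sx.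
set a := x ^+ n.+1; set b := x ^+ (n.+1 * n.+1); move=> hS /=.
rewrite -mulrBl ltr_pdivlMr //.
exact: num_ineq.
Qed.

Lemma key (D D' : sspace n -> R) t : t < 1 ->
  (forall q : {ffun cell -> R}, is_prob q ->
     forall t : R, t < kappa q ->
       multinomial n q [pred k | t <= D' k] = multinomial n q [pred k | t <= D k]) ->
  forall k, (t <= D' k) = (t <= D k).
Proof.
move=> ht H.
pose g (k : sspace n) : R := ((t <= D' k)%R)%:R - ((t <= D k)%R)%:R.
pose p : {poly R} := \sum_(k : sspace n) (g k * Cf k) *: 'X^(ex n k).
pose u := 1 - t.
have hu : 0 < u by rewrite /u; lra.
have A : forall x, 0 < x -> x * (2 * u + 8) <= u -> p.[x] = 0.
  move=> x hx hxu.
  have hk := @kappa_qx x t hx hxu ht.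
  have hm := H _ (@qx_prob x hx) t hk.
  have E1 : \sum_k g k * mult_pmf n (qx x) k =
     multinomial n (qx x) [pred k | t <= D' k] - multinomial n (qx x) [pred k | t <= D k].
    rewrite /multinomial [X in _ = X - _]big_mkcond [X in _ = _ - X]big_mkcond -sumrB; apply: eq_bigr => k _ /=.
    by rewrite /g; case: (t <= D' k); case: (t <= D k) => /=; ring.
  rewrite hm subrr in E1.
  have hS0 : Sx x != 0 by rewrite gt_eqF // Sx_gt0.
  rewrite /p horner_sum.
  transitivity (\sum_k g k * mult_pmf n (qx x) k * Sx x ^+ n); last first.
    by rewrite -mulr_suml E1 mul0r.
  apply: eq_bigr => k _; rewrite hornerZ hornerXn pmf_qx //.
  field; exact: expf_neq0.
have B : p = 0.
  apply/eqP; apply: contraT => hp.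
  pose r := u / (2 * u + 8).
  have hr : 0 < r by rewrite /r divr_gt0 //; lra.
  have hru : r * (2 * u + 8) = u by rewrite /r; field; lra.
  pose rs := mkseq (fun i => r / (i.+1)%:R) (size p).
  have := @max_poly_roots _ p rs hp.
  rewrite size_mkseq ltnn; apply.
    apply/allP => y /mapP [i _ ->]; apply/rootP; apply: A.
      by rewrite divr_gt0 // ltr0Sn.
    have h1 : r / (i.+1)%:R <= r.
      rewrite ler_pdivrMr ?ltr0Sn //; apply: ler_peMr; [exact: ltW | by rewrite ler1n].
    apply: (le_trans (y := r * (2 * u + 8))); last by rewrite hru.
    by rewrite ler_wpM2r //; lra.
  rewrite map_inj_uniq ?iota_uniq // => i j h.
  have : (i.+1)%:R = (j.+1)%:R :> R.
    apply: invr_inj; apply: (mulfI (x := r)); first by rewrite gt_eqF.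
    exact: h.
  by move/eqP; rewrite eqr_nat eqSS => /eqP.
move=> k0.
have := congr1 (fun q : {poly R} => q`_(ex n k0)) B.
rewrite /= coef0 /p coef_sumMXn (bigD1 k0) //= big1 ?addr0; last first.
  move=> k /andP [/eqP h hne]; have := @ex_inj n _ _ h; by move/eqP: hne.
move/eqP; rewrite mulf_eq0 (negbTE (Cf_neq0 k0)) orbF /g subr_eq0.
by case: (t <= D' k0); case: (t <= D k0); rewrite // eqr_nat.
Qed.
End Key.

Theorem lemma14 (R : realType) (n : nat) (beta : R)
    (D D' : sspace n -> R) :
  (0 < n)%N ->
  0 <= beta <= 1 ->
  (forall k, -1 <= D k <= 1) ->
  (forall k, -1 <= D' k <= 1) ->
  lower_conf_bound n beta D ->
  lower_conf_bound n beta D' ->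
  (forall q : {ffun cell -> R}, is_prob q ->
     forall t : R, t < kappa q ->
       multinomial n q [pred k | t <= D' k] = multinomial n q [pred k | t <= D k]) ->
  D = D'.
Proof.
move=> _ _ hD hD' _ _ H; apply: functional_extensionality => k.
have /andP [_ h1] := hD k; have /andP [_ h2] := hD' k.
pose t := (D k + D' k) / 2.
have [lt|gt|->] := ltgtP (D k) (D' k); last by [].
- have ht : t < 1 by rewrite /t; lra.
  have := @key R n D D' t ht H k; rewrite /t.
  have -> : (D k + D' k) / 2 <= D' k by lra.
  have -> : (D k + D' k) / 2 <= D k = false by apply/negbTE; rewrite -ltNge; lra.
  by [].
- have ht : t < 1 by rewrite /t; lra.
  have := @key R n D D' t ht H k; rewrite /t.
  have -> : (D k + D' k) / 2 <= D k by lra.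
  have -> : (D k + D' k) / 2 <= D' k = false by apply/negbTE; rewrite -ltNge; lra.
  by [].
Qed.
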